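(* Let $R$ be a commutative ring which is free as an abelian group, $n\ge2$, $p$ a prime, and write $\Gamma_m=\Gamma(SL_n(R),p^m)$. Let $r,s,l\ge1$ with $l\le s$. Then the group extension $$1\to\Gamma_{r+s-l}/\Gamma_{r+s}\to\Gamma_r/\Gamma_{r+s}\to\Gamma_r/\Gamma_{r+s-l}\to1$$ is central if and only if $r\ge l$.
   Context: $\Gamma(SL_n(R),p^m)=\ker\big(SL_n(R)\to SL_n(R\otimes_{\mathbb{Z}}\mathbb{Z}/p^m)\big)$. An extension $1\to N\to G\to Q\to1$ is central if $N$ lies in the center of $G$. *)

(* Defs.v *)
From mathcomp Require Import all_boot all_order all_algebra.
Set Implicit Arguments. Unset Strict Implicit. Unset Printing Implicit Defensive.
Import GRing.Theory.
Local Open Scope ring_scope.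

Definition free_abelian (R : nzRingType) : Prop :=
  exists (I : eqType) (b : I -> R),
    (forall x : R, exists (s : seq I) (c : I -> int),
        x = \sum_(i <- s) b i *~ c i) /\
    (forall (s : seq I) (c : I -> int), uniq s ->
        \sum_(i <- s) b i *~ c i = 0 -> forall i, i \in s -> c i = 0).

(* Membership in the principal congruence subgroup
   Gamma(SL_n(R), p^m) = ker (SL_n(R) -> SL_n(R (x)_Z Z/p^m)),
   using R (x)_Z Z/p^m = R / p^m R: A has determinant 1 and A = 1 mod p^m R
   entrywise. *)
Definition in_Gamma (R : comNzRingType) (n p m : nat) (A : 'M[R]_n) : Prop :=
  \det A = 1 /\ exists C : 'M[R]_n, A = 1%:M + (p ^ m)%N%:R *: C.

(* For groups K <= N <= G of matrices (given as predicates), the extension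
   1 -> N/K -> G/K -> G/N -> 1 is central iff N/K lies in the center of G/K,
   i.e. for all a in G, b in N, the cosets (a b) K and (b a) K coincide. *)
Definition quotient_central (R : comNzRingType) (n : nat)
    (G N K : 'M[R]_n -> Prop) : Prop :=
  forall A B : 'M[R]_n, G A -> N B ->
    exists C : 'M[R]_n, K C /\ A *m B = (B *m A) *m C.

(* Main.v *)
From mathcomp Require Import all_boot all_order all_algebra.
From mathcomp Require Import zify.
Require Import Defs.
Set Implicit Arguments. Unset Strict Implicit. Unset Printing Implicit Defensive.
Import GRing.Theory Num.Theory.
Local Open Scope ring_scope.

Section Free.
Variables (R : nzRingType) (I : eqType) (b : I -> R).
Hypothesis bgen : forall x : R, exists (s : seq I) (c : I -> int),
        x = \sum_(i <- s) b i *~ c i.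
Hypothesis bfree : forall (s : seq I) (c : I -> int), uniq s ->
        \sum_(i <- s) b i *~ c i = 0 -> forall i, i \in s -> c i = 0.

Lemma uniq_rep_seq (s : seq I) (c : I -> int) : exists (u : seq I) (e : I -> int),
  uniq u /\ \sum_(i <- s) b i *~ c i = \sum_(i <- u) b i *~ e i.
Proof.
elim: s => [|i s [u [e [Uu He]]]].
  by exists [::], c; rewrite !big_nil.
rewrite big_cons He.
case Hiu: (i \in u).
  exists u, (fun j => e j + (j == i)%:Z * c i); split => //.
  under [RHS]eq_bigr => j _ do rewrite mulrzDr.
  rewrite big_split /= addrC; congr (_ + _).
  rewrite (bigD1_seq i) //= eqxx mul1r big1 ?addr0 //.
  by move=> j /negbTE ->; rewrite mul0r mulr0z.
exists (i :: u), (fun j => if j == i then c i else e j); split.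
  by rewrite /= Hiu.
rewrite big_cons eqxx; congr (_ + _).
apply: eq_big_seq => j ju /=.
by case: eqP => // ji; rewrite ji Hiu in ju.
Qed.

Lemma uniq_rep (x : R) : exists (u : seq I) (e : I -> int),
  uniq u /\ x = \sum_(i <- u) b i *~ e i.
Proof. have [s [c ->]] := bgen x; exact: uniq_rep_seq. Qed.

Lemma sum_sub (s u : seq I) (F : I -> R) : uniq s -> uniq u -> {subset s <= u} ->
  \sum_(i <- s) F i = \sum_(i <- u) (if i \in s then F i else 0).
Proof.
move=> Us Uu su; rewrite -big_mkcond -big_filter; apply: perm_big.
apply: uniq_perm => //; first exact: filter_uniq.
by move=> i; rewrite mem_filter; case Hi: (i \in s) => //=; rewrite su.
Qed.

Lemma coef_eq (s s' : seq I) (c c' : I -> int) : uniq s -> uniq s' ->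
  \sum_(i <- s) b i *~ c i = \sum_(i <- s') b i *~ c' i ->
  forall i, i \in s -> c i = if i \in s' then c' i else 0.
Proof.
move=> Us Us' E.
set u := undup (s ++ s').
have Uu : uniq u := undup_uniq _.
have su : {subset s <= u} by move=> j js; rewrite mem_undup mem_cat js.
have su' : {subset s' <= u} by move=> j js; rewrite mem_undup mem_cat js orbT.
move: E; rewrite (sum_sub _ Us Uu su) (sum_sub _ Us' Uu su') => /eqP.
rewrite -subr_eq0 -sumrB => /eqP E0.
have E1 : \sum_(j <- u) b j *~ ((if j \in s then c j else 0) - (if j \in s' then c' j else 0)) = 0.
  rewrite -[RHS]E0; apply: eq_bigr => j _.
  by rewrite mulrzBr; case: (j \in s); case: (j \in s'); rewrite ?mulr0z.
move=> i is_; have := bfree Uu E1 (su _ is_).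
by rewrite is_ => /eqP; rewrite subr_eq0 => /eqP.
Qed.

Lemma torsion_free (m : nat) (w : R) : (0 < m)%N -> w *+ m = 0 -> w = 0.
Proof.
move=> m0; have [u [e [Uu ->]]] := uniq_rep w.
rewrite -sumrMnl => E.
have : \sum_(i <- u) b i *~ (e i * m%:Z) = \sum_(i <- ([::] : seq I)) b i *~ 0.
  by rewrite big_nil -[RHS]E; apply: eq_bigr => i _; rewrite mulrzA pmulrn.
move/(@coef_eq u [::] _ _ Uu isT) => H.
apply: big1_seq => i /andP[_ iu]; have := H i iu; rewrite in_nil.
move/eqP; rewrite mulf_eq0 => /orP[/eqP -> |]; first by rewrite mulr0z.
by move/eqP=> [mm]; rewrite mm in m0.
Qed.

End Free.

Lemma int_small (c x : int) (P : nat) : (1 < P)%N ->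
  c = x * (P ^ `|c|%N)%N%:Z -> c = 0.
Proof.
move=> P1 E.
have H := ltn_expl `|c|%N P1.
have hc : `|c|%N = (`|x|%N * P ^ `|c|%N)%N by rewrite {1}E abszM.
case: (x =P 0) => [x0 |/eqP x0]; first by rewrite E x0 mul0r.
have hx : (0 < `|x|%N)%N by rewrite absz_gt0.
exfalso.
have : (P ^ `|c|%N <= `|x|%N * P ^ `|c|%N)%N by rewrite leq_pmull.
rewrite -hc; lia.
Qed.

Lemma free_not_div (R : comNzRingType) (P : nat) (y : R) :
  free_abelian R -> (1 < P)%N -> 1 = P%:R * y -> False.
Proof.
move=> [I [b [bgen bfree]]] P1 E.
have [s [c [Us Hs]]] := uniq_rep bgen (1 : R).
have c0 : forall i, i \in s -> c i = 0.
  move=> i is_.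
  pose K := `|c i|%N.
  have [s' [c' [Us' Hs']]] := uniq_rep bgen (y ^+ K).
  have E2 : \sum_(j <- s) b j *~ c j = \sum_(j <- s') b j *~ (c' j * (P ^ K)%N%:Z).
    rewrite -Hs.
    have -> : (1 : R) = (P ^ K)%N%:R * y ^+ K by rewrite natrX -exprMn -E expr1n.
    rewrite Hs' mulr_natl -sumrMnl; apply: eq_bigr => j _.
    by rewrite mulrzA pmulrn.
  have := coef_eq bfree Us Us' E2 is_.
  case: (i \in s') => [|->] //.
  exact: int_small.
have : (1 : R) = 0.
  by rewrite Hs; apply: big1_seq => i /andP[_ /c0 ->].
by move/eqP; rewrite oner_eq0.
Qed.

Lemma key_contra (R : comNzRingType) (p k j : nat) (y : R) :
  free_abelian R -> prime p -> (0 < j)%N ->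
  (p ^ k)%N%:R * (1 - (p ^ j)%N%:R * y) = 0 -> False.
Proof.
move=> fa pp j0 E.
have fa' := fa; move: fa' => [I [b [bgen bfree]]].
have p0 : (0 < p ^ k)%N by rewrite expn_gt0 prime_gt0.
move: E; rewrite mulr_natl => /(torsion_free bgen bfree p0) /eqP.
rewrite subr_eq0 => /eqP.
apply: free_not_div fa _.
have p1 := prime_gt1 pp.
by case: j j0 => // j' _; rewrite expnS (leq_trans p1) // leq_pmulr // expn_gt0 prime_gt0.
Qed.

Lemma det_elem_lo (R : comNzRingType) n (i j : 'I_n) (c : R) : (j < i)%N ->
  \det (1%:M + c *: delta_mx i j) = 1.
Proof.
move=> ji; rewrite det_trig.
  apply: big1 => k _; rewrite !mxE eqxx /=.
  case: (k =P i) => [ki|]; last by rewrite mulr0 addr0.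
  have -> : (k == j) = false by apply/eqP => kj; move: ji; rewrite -ki kj ltnn.
  by rewrite andbF mulr0 addr0.
apply/is_trig_mxP => a b ab; rewrite !mxE.
have -> : (a == b) = false by apply/eqP => e; move: ab; rewrite e ltnn.
case: (a =P i) => [ai|]; rewrite ?mulr0 ?addr0 //=.
case: (b =P j) => [bj|]; rewrite ?mulr0 ?addr0 //=.
by exfalso; move: ab ji; rewrite ai bj; lia.
Qed.

Lemma det_elem (R : comNzRingType) n (i j : 'I_n) (c : R) : i != j ->
  \det (1%:M + c *: delta_mx i j) = 1.
Proof.
move=> ij; case: (ltngtP i j) => [lt|gt|e]; last by rewrite (val_inj e) eqxx in ij.
  rewrite -det_tr linearD /= linearZ /= tr_scalar_mx trmx_delta.
  exact: det_elem_lo.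
exact: det_elem_lo.
Qed.

Lemma comm_expand (R : comNzRingType) n (a b : R) (X Y : 'M[R]_n) :
  (1%:M + a *: X) *m (1%:M + b *: Y) =
  (1%:M + b *: Y) *m (1%:M + a *: X) + (a * b) *: (X *m Y - Y *m X).
Proof.
rewrite !mulmxDl !mulmxDr !mul1mx !mulmx1 -!scalemxAl -!scalemxAr !scalerA.
rewrite scalerBr (mulrC b a).
set U := (a * b) *: (X *m Y); set V := (a * b) *: (Y *m X).
by rewrite -!addrA; congr (_ + _); rewrite [V + _]addrC subrK addrCA.

Qed.

Lemma central_dir (R : comNzRingType) (n p r s l : nat) :
  (l <= r)%N -> (l <= s)%N ->
  quotient_central (@in_Gamma R n p r) (@in_Gamma R n p (r + s - l))
                    (@in_Gamma R n p (r + s)).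
Proof.
move=> lr ls A B [dA [X EA]] [dB [Y EB]].
set q : R := (p ^ (r + s))%N%:R.
set W := (p ^ (r - l))%N%:R *: (X *m Y - Y *m X).
have dBA : \det (B *m A) = 1 by rewrite det_mulmx dA dB mulr1.
have EQ : A *m B = (B *m A) *m (1%:M + q *: (\adj (B *m A) *m W)).
  rewrite mulmxDr mulmx1 -scalemxAr mulmxA mul_mx_adj dBA mul1mx.
  rewrite EA EB comm_expand; congr (_ + _).
  rewrite /W scalerA -!natrM -!expnD; congr (_%:R *: _); congr (p ^ _)%N; lia.
exists (1%:M + q *: (\adj (B *m A) *m W)); split => //.
split; last by exists (\adj (B *m A) *m W).
have := congr1 determinant EQ.
by rewrite !det_mulmx dA dB !mul1r => /esym.
Qed.

Lemma noncentral_dir (R : comNzRingType) (n p r s l : nat) :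
  free_abelian R -> (2 <= n)%N -> prime p -> (r < l)%N -> (l <= s)%N ->
  quotient_central (@in_Gamma R n p r) (@in_Gamma R n p (r + s - l))
                    (@in_Gamma R n p (r + s)) -> False.
Proof.
move=> fa n2 pp rl ls Hc.
have h0 : (0 < n)%N by lia.
have h1 : (1 < n)%N by lia.
pose i0 := Ordinal h0; pose i1 := Ordinal h1.
have i01 : i0 != i1 by [].
set t := (r + s - l)%N.
pose a : R := (p ^ r)%N%:R; pose b : R := (p ^ t)%N%:R.
pose A := 1%:M + a *: delta_mx i0 i1; pose B := 1%:M + b *: delta_mx i1 i0.
have GA : in_Gamma p r A.
  by split; [exact: det_elem | exists (delta_mx i0 i1)].
have GB : in_Gamma p t B.
  by split; [apply: det_elem; rewrite eq_sym | exists (delta_mx i1 i0)].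
have [C [[dC [D ->]] E]] := Hc A B GA GB.
move: E; rewrite /A /B comm_expand !mul_delta_mx.
set M := _ *m (1%:M + a *: _).
rewrite [M *m _]mulmxDr mulmx1 -scalemxAr.
set MD := M *m D.
move=> /(addrI M) /(congr1 (fun N : 'M[R]_n => N i0 i0)).
rewrite ![in LHS]mxE [in RHS]mxE /= subr0 mulr1.
set y := MD i0 i0 => E.
apply: (@key_contra R p (r + t) (l - r) y fa pp); first lia.
rewrite mulrBr mulr1 mulrA -natrM -expnD.
have -> : (r + t + (l - r))%N = (r + s)%N by rewrite /t; lia.
rewrite -E /a /b -natrM -expnD; exact: subrr.
Qed.

Theorem lemma7p1 (R : comNzRingType) (n p r s l : nat) :
  free_abelian R -> (2 <= n)%N -> prime p ->
  (1 <= r)%N -> (1 <= s)%N -> (1 <= l)%N -> (l <= s)%N ->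
  (quotient_central (@in_Gamma R n p r) (@in_Gamma R n p (r + s - l))
                    (@in_Gamma R n p (r + s))
   <-> (l <= r)%N).
Proof.
move=> fa n2 pp r1 s1 l1 ls; split.
  move=> Hc; case: (leqP l r) => // rl.
  by case: (noncentral_dir fa n2 pp rl ls Hc).
by move=> lr; exact: central_dir.
Qed.
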